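(* Let $\mathbf A$ be a finite algebra belonging to a congruence modular variety with $\mathrm{typ}\{\mathbf A\}\subseteq\{\mathbf 4\}$, and let $\alpha$ be a join irreducible congruence of $\mathbf A$. Then (1) $a<\!>_\alpha b$ whenever $\{a,b\}$ is a $(\delta,\delta')$-minimal set for some covering pair $\delta\prec\delta'\le\alpha$ of congruences; (2) for every $a\in A$ the graph $(a/\alpha,<\!>_\alpha)$ is connected; (3) all unary polynomials of $\mathbf A$ preserve the relation $\le_\alpha$, and all polynomials of $\mathbf A$ preserve the transitive closure of $\le_\alpha$.
   Context: Tame congruence theory (Hobby–McKenzie): for congruences $\delta<\delta'$ of a finite algebra, $U_{\mathbf A}(\delta,\delta')$ is the set of all $f(A)$ with $f$ a unary polynomial and $f(\delta')\not\subseteq\delta$; its inclusion-minimal members are the $(\delta,\delta')$-minimal sets. $\mathrm{typ}\{\mathbf A\}$ is the set of types of all prime quotients; type $\mathbf 4$ is the lattice type. For a join irreducible congruence $\alpha$ let $\alpha^-$ be its unique lower cover; under the hypotheses an $(\alpha^-,\alpha)$-minimal set is a $2$-element set $\{0,1\}$ on which the induced algebra is polynomially equivalent to the $2$-element lattice; fix one and label it so that $0<1$ in that lattice order. Define $a\le_\alpha b$ iff there is a unary polynomial $f$ of $\mathbf A$ with $f(1)=b$ and $f(0)=a$. Write $a<\!>_\alpha b$ iff ($a\le_\alpha b$ or $b\le_\alpha a$) and $a\ne b$. ''Belongs to a congruence modular variety'' means the variety generated by $\mathbf A$ is congruence modular. *)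

(* Defs.v *)
From mathcomp Require Import all_boot.
From Stdlib Require Relations.
Set Implicit Arguments.
Unset Strict Implicit.
Unset Printing Implicit Defensive.

Definition ops (T F : Type) (ar : F -> nat) := forall f : F, ('I_(ar f) -> T) -> T.

Inductive pgen (T F : Type) (ar : F -> nat) (op : ops T ar) (n : nat)
  : (('I_n -> T) -> T) -> Prop :=
| pg_proj (i : 'I_n) : pgen op (fun x => x i)
| pg_const (c : T) : pgen op (fun _ => c)
| pg_app (f : F) (g : 'I_(ar f) -> ('I_n -> T) -> T) :
    (forall j, pgen op (g j)) -> pgen op (fun x => op f (fun j => g j x)).

Definition is_poly (T F : Type) (ar : F -> nat) (op : ops T ar) (n : nat)
  (p : ('I_n -> T) -> T) : Prop :=
  exists q, pgen op q /\ forall x, p x = q x.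

Definition is_upoly (T F : Type) (ar : F -> nat) (op : ops T ar) (f : T -> T) : Prop :=
  is_poly op (fun v : 'I_1 -> T => f (v ord0)).

Inductive term (F : Type) (ar : F -> nat) : Type :=
| Var of nat
| App (f : F) of ('I_(ar f) -> term ar).

Fixpoint teval (T F : Type) (ar : F -> nat) (op : ops T ar) (v : nat -> T)
  (t : term ar) : T :=
  match t with
  | Var i => v i
  | App f ts => op f (fun j => teval op v (ts j))
  end.

(* (B, opB) satisfies every identity s = t that holds in (T, op), i.e. B lies
   in the variety generated by (T, op)  (= Mod Id(T), = HSP(T) by Birkhoff). *)
Definition in_variety_gen (T F : Type) (ar : F -> nat) (op : ops T ar)
  (B : Type) (opB : ops B ar) : Prop :=
  forall s t : term ar,
    (forall v : nat -> T, teval op v s = teval op v t) ->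
    (forall v : nat -> B, teval opB v s = teval opB v t).

Definition is_congP (B F : Type) (ar : F -> nat) (opB : ops B ar)
  (th : B -> B -> Prop) : Prop :=
  Relation_Definitions.equivalence B th /\
  forall f (x y : 'I_(ar f) -> B),
    (forall j, th (x j) (y j)) -> th (opB f x) (opB f y).

Definition cjoinP (B F : Type) (ar : F -> nat) (opB : ops B ar)
  (a b : B -> B -> Prop) : B -> B -> Prop :=
  fun x y => forall th, is_congP opB th ->
    (forall u v, a u v -> th u v) -> (forall u v, b u v -> th u v) -> th x y.

(* Con(B) is a modular lattice: a <= c implies (a v b) ^ c <= a v (b ^ c)
   (the reverse inclusion always holds) *)
Definition cong_modular (B F : Type) (ar : F -> nat) (opB : ops B ar) : Prop :=
  forall a b c, is_congP opB a -> is_congP opB b -> is_congP opB c ->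
    (forall u v, a u v -> c u v) ->
    forall x y, cjoinP opB a b x y /\ c x y ->
      cjoinP opB a (fun u v => b u v /\ c u v) x y.

Definition gen_CM_variety (T F : Type) (ar : F -> nat) (op : ops T ar) : Prop :=
  forall (B : Type) (opB : ops B ar), in_variety_gen op opB -> cong_modular opB.

Section Finite.
Variables (A : finType) (F : Type) (ar : F -> nat) (op : ops A ar).

Definition is_cong (th : rel A) : Prop :=
  [/\ reflexive th, symmetric th, transitive th &
      forall f (x y : 'I_(ar f) -> A),
        (forall j, th (x j) (y j)) -> th (op x) (op y)].

Definition subrel_ (a b : rel A) : Prop := forall x y, a x y -> b x y.

Definition covers (d d' : rel A) : Prop :=
  [/\ is_cong d, is_cong d', subrel_ d d', (exists x y, d' x y /\ ~~ d x y) &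
      forall th, is_cong th -> subrel_ d th -> subrel_ th d' ->
        subrel_ th d \/ subrel_ d' th].

Definition join_irreducible (al : rel A) : Prop :=
  [/\ is_cong al, (exists x y, al x y /\ x != y) &
      forall b c, is_cong b -> is_cong c -> subrel_ b al -> subrel_ c al ->
        (forall th, is_cong th -> subrel_ b th -> subrel_ c th -> subrel_ al th) ->
        subrel_ al b \/ subrel_ al c].

Definition in_UA (d d' : rel A) (U : {set A}) : Prop :=
  exists f : A -> A, [/\ is_upoly op f, U = f @: setT &
                         exists x y, d' x y /\ ~~ d (f x) (f y)].

Definition minimal_set (d d' : rel A) (U : {set A}) : Prop :=
  in_UA d d' U /\ forall V, in_UA d d' V -> V \subset U -> V = U.

Definition trace (d d' : rel A) (U N : {set A}) : Prop :=
  exists x, [/\ x \in U, (exists y, [/\ y \in U, d' x y & ~~ d x y]) &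
                N = [set y in U | d' x y]].

Definition lat2_ops : ops bool (fun _ : bool => 2) :=
  fun b v => if b then v ord0 && v ord_max else v ord0 || v ord_max.

(* The algebra A|_N / th|_N is polynomially equivalent to the 2-element
   lattice via the isomorphism (A|_N)/(th|_N) -> bool induced by h :
   h maps N onto bool with kernel th|_N, and for every n the n-ary polynomial
   operations of A|_N / th|_N (induced by the polynomials of A preserving N),
   transported along h, are exactly the n-ary lattice polynomials of bool. *)
Definition induced_poly (N : {set A}) (h : A -> bool) (n : nat)
  (q : ('I_n -> bool) -> bool) : Prop :=
  exists p, [/\ is_poly op p,
    (forall x : 'I_n -> A, (forall j, x j \in N) -> p x \in N) &
    (forall x : 'I_n -> A, (forall j, x j \in N) -> h (p x) = q (fun j => h (x j)))].

Definition poly_equiv_lat2 (N : {set A}) (th : rel A) (h : A -> bool) : Prop :=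
  [/\ (exists2 x, x \in N & h x = false), (exists2 x, x \in N & h x = true),
      (forall x y, x \in N -> y \in N -> (th x y <-> h x = h y)) &
      forall n q, induced_poly N h (n := n) q <-> is_poly (n := n) lat2_ops q].

(* typ{A} subset {4}: every prime quotient has the lattice type *)
Definition typ_sub4 : Prop :=
  forall d d', covers d d' -> forall U, minimal_set d d' U ->
    forall N, trace d d' U N -> exists h, poly_equiv_lat2 N d h.

(* the relation <=_alpha w.r.t. the fixed labelled minimal set {o, i} *)
Definition le_al (o i : A) (a b : A) : Prop :=
  exists f, [/\ is_upoly op f, f i = b & f o = a].

Definition ltgt_al (o i : A) (a b : A) : Prop :=
  (le_al o i a b \/ le_al o i b a) /\ a <> b.

End Finite.

(* Main.v *)
Require Import Defs.
From mathcomp Require Import all_boot.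
From Stdlib Require Relations.
From Stdlib Require Import FunctionalExtensionality IndefiniteDescription ClassicalDescription.
Set Implicit Arguments.
Unset Strict Implicit.
Unset Printing Implicit Defensive.
Import Relation_Operators.

Section Aux.
Variables (A : finType) (F : Type) (ar : F -> nat) (op : ops A ar).

Lemma pgen_comp n m (q : ('I_n -> A) -> A) (s : 'I_n -> ('I_m -> A) -> A) :
  pgen op q -> (forall i, is_poly op (s i)) ->
  is_poly op (fun v => q (fun i => s i v)).
Proof.
move=> Hq Hs; induction Hq as [i|c|f g Hg IH].
- exact: Hs.
- by exists (fun _ => c); split => //; constructor.
- pose G j := proj1_sig (constructive_indefinite_description _ (IH j)).
  have HG j : pgen op (G j) /\ forall v, g j (fun i => s i v) = G j v.
    exact: (proj2_sig (constructive_indefinite_description _ (IH j))).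
  exists (fun v => @op f (fun j => G j v)); split.
    by constructor => j; case: (HG j).
  move=> v; f_equal; apply: functional_extensionality => j.
  by case: (HG j) => _ ->.
Qed.

Lemma poly_comp n m (p : ('I_n -> A) -> A) (s : 'I_n -> ('I_m -> A) -> A) :
  is_poly op p -> (forall i, is_poly op (s i)) ->
  is_poly op (fun v => p (fun i => s i v)).
Proof.
move=> [q [Hq Epq]] Hs.
have [r [Hr Er]] := pgen_comp Hq Hs.
by exists r; split => // v; rewrite Epq Er.
Qed.

Lemma upoly_comp g h : is_upoly op g -> is_upoly op h -> is_upoly op (fun x => g (h x)).
Proof.
move=> Hg Hh.
exact: (@poly_comp 1 1 (fun w => g (w ord0)) (fun _ v => h (v ord0)) Hg (fun _ => Hh)).
Qed.

Lemma upoly_const c : is_upoly op (fun _ => c).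
Proof. by exists (fun _ => c); split => //; constructor. Qed.

Lemma upoly_id : is_upoly op id.
Proof. by exists (fun v => v ord0); split => //; constructor. Qed.

Lemma pgen_cong (th : rel A) n (q : ('I_n -> A) -> A) : is_cong op th -> pgen op q ->
  forall x y, (forall j, th (x j) (y j)) -> th (q x) (q y).
Proof.
move=> [Hr _ _ Hc] Hq; induction Hq as [i|c|f g Hg IH] => x y Hxy //.
by apply: Hc => j; apply: IH.
Qed.

Lemma upoly_cong (th : rel A) f : is_cong op th -> is_upoly op f ->
  forall x y, th x y -> th (f x) (f y).
Proof.
move=> Hth [q [Hq Eq]] x y Hxy.
have := Eq (fun _ => x); have := Eq (fun _ => y); rewrite /= => -> ->.
exact: (pgen_cong Hth Hq).
Qed.

Definition upd n (x : 'I_n -> A) (k : 'I_n) (t : A) : 'I_n -> A :=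
  fun j => if j == k then t else x j.

Lemma upd_poly n (p : ('I_n -> A) -> A) x k : is_poly op p ->
  is_upoly op (fun t => p (upd x k t)).
Proof.
move=> Hp.
apply: (@poly_comp n 1 p (fun j v => if j == k then v ord0 else x j) Hp) => j.
case: (j == k).
- by exists (fun v => v ord0); split => //; constructor.
- by exists (fun _ => x j); split => //; constructor.
Qed.

Lemma compat_poly (R : A -> A -> Prop) n (p : ('I_n -> A) -> A) :
  (forall x, R x x) -> (forall x y z, R x y -> R y z -> R x z) ->
  (forall f, is_upoly op f -> forall x y, R x y -> R (f x) (f y)) ->
  is_poly op p -> forall x y, (forall j, R (x j) (y j)) -> R (p x) (p y).
Proof.
move=> Rr Rt Ru Hp x y Hxy.
pose z k := fun j : 'I_n => if (j < k)%N then y j else x j.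
have Hz k : (k <= n)%N -> R (p x) (p (z k)).
  elim: k => [|k IH] Hk.
    have -> : z 0 = x by apply: functional_extensionality.
    exact: Rr.
  have Hk' : (k < n)%N by [].
  pose K := Ordinal Hk'.
  have E1 : z k = upd (z k) K (x K).
    apply: functional_extensionality => j; rewrite /upd /z.
    case: eqP => [->|//]; by rewrite /= ltnn.
  have E2 : z k.+1 = upd (z k) K (y K).
    apply: functional_extensionality => j; rewrite /upd /z ltnS leq_eqVlt.
    case: (eqVneq j K) => [->|Hne] /=; first by rewrite eqxx.
    suff -> : (nat_of_ord j == k) = false by [].
    by apply/negbTE; apply: contra Hne => /eqP Hj; apply/eqP; apply: val_inj.
  apply: Rt (IH (ltnW Hk)) _.
  rewrite E2 [in X in R X _]E1.
  exact: (Ru _ (upd_poly (z k) K Hp)).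
have -> : y = z n.
  apply: functional_extensionality => j; by rewrite /z ltn_ord.
exact: Hz.
Qed.

Definition stepR (B : A -> A -> Prop) u v := exists g, is_upoly op g /\
  exists p q, B p q /\ ((u = g p /\ v = g q) \/ (u = g q /\ v = g p)).
Definition CgP B := clos_refl_trans A (stepR B).
Definition Cgb B : rel A := fun x y =>
  if excluded_middle_informative (CgP B x y) then true else false.

Lemma CgbP B x y : Cgb B x y <-> CgP B x y.
Proof. by rewrite /Cgb; case: excluded_middle_informative. Qed.

Lemma CgP_sym B x y : CgP B x y -> CgP B y x.
Proof.
elim=> [u v [g [Hg [p [q [Hpq H]]]]]| u | u w v _ IH1 _ IH2].
- apply: rt_step; exists g; split => //; exists p, q; split => //.
  by case: H => [[-> ->]|[-> ->]]; [right|left].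
- exact: rt_refl.
- exact: rt_trans IH2 IH1.
Qed.

Lemma CgP_up B f : is_upoly op f -> forall x y, CgP B x y -> CgP B (f x) (f y).
Proof.
move=> Hf x y; elim=> [u v [g [Hg [p [q [Hpq H]]]]]| u | u w v _ IH1 _ IH2].
- apply: rt_step; exists (fun t => f (g t)); split; first exact: upoly_comp.
  by exists p, q; split => //; case: H => [[-> ->]|[-> ->]]; [left|right].
- exact: rt_refl.
- exact: rt_trans IH1 IH2.
Qed.

Lemma Cgb_cong B : is_cong op (Cgb B).
Proof.
split.
- by move=> x; apply/CgbP; apply: rt_refl.
- by move=> x y; apply/idP/idP => /CgbP H; apply/CgbP; apply: CgP_sym.
- by move=> y x z /CgbP H1 /CgbP H2; apply/CgbP; apply: rt_trans H1 H2.
- move=> f x y Hxy; apply/CgbP.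
  have Hp : is_poly op (@op f).
    exists (fun v => @op f (fun j => v j)); split => //.
    by constructor => j; constructor.
  apply: (compat_poly (R := CgP B) _ _ _ Hp).
  + by move=> t; apply: rt_refl.
  + by move=> u v w; apply: rt_trans.
  + by move=> g Hg; apply: CgP_up.
  + by move=> j; apply/CgbP.
Qed.

Lemma CgP_base B p q : B p q -> CgP B p q.
Proof.
move=> H; apply: rt_step; exists id; split; first exact: upoly_id.
by exists p, q; split => //; left.
Qed.

Lemma CgP_min B (th : rel A) : is_cong op th -> (forall p q, B p q -> th p q) ->
  forall x y, CgP B x y -> th x y.
Proof.
move=> Hth HB x y; elim=> [u v [g [Hg [p [q [Hpq H]]]]]| u | u w v _ IH1 _ IH2].
- have := upoly_cong Hth Hg (HB _ _ Hpq); case: Hth => _ Hs _ _.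
  by case: H => [[-> ->]|[-> ->]] //; rewrite Hs.
- by case: Hth.
- by case: Hth => _ _ Ht _; apply: Ht IH2.
Qed.

Lemma cong_and (t1 t2 : rel A) : is_cong op t1 -> is_cong op t2 ->
  is_cong op (fun x y => t1 x y && t2 x y).
Proof.
move=> [r1 s1 tr1 c1] [r2 s2 tr2 c2]; split.
- by move=> x; rewrite r1 r2.
- by move=> x y; rewrite s1 s2.
- move=> y x z /andP [h1 h2] /andP [h3 h4]; apply/andP; split.
  exact: tr1 h3. exact: tr2 h4.
- move=> f x y H; apply/andP; split.
  by apply: c1 => j; case/andP: (H j).
  by apply: c2 => j; case/andP: (H j).
Qed.

Lemma pair_img (d d' : rel A) f a b x y : is_cong op d -> is_cong op d' ->
  is_upoly op f -> [set a; b] = f @: setT -> d' x y -> ~~ d (f x) (f y) ->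
  d' a b /\ ~~ d a b.
Proof.
move=> Hd Hd' Hf EU Hxy Hn.
have H1 := upoly_cong Hd' Hf Hxy.
have ix : f x \in [set a; b] by rewrite EU; apply: imset_f.
have iy : f y \in [set a; b] by rewrite EU; apply: imset_f.
case: Hd => rd sd _ _; case: Hd' => _ sd' _ _.
move: ix iy; rewrite !inE => /orP [] /eqP ex /orP [] /eqP ey;
  move: Hn H1; rewrite ex ey => Hn H1;
  first [ by rewrite rd in Hn | by split | by split; rewrite 1?sd' 1?sd ].
Qed.

End Aux.

Theorem lemma8p2 (A : finType) (F : Type) (ar : F -> nat) (op : ops A ar)
  (al alm : rel A) (o i : A) :
  gen_CM_variety op ->
  typ_sub4 op ->
  join_irreducible op al ->
  covers op alm al ->
  minimal_set op alm al [set o; i] ->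
  o != i ->
  (exists h, [/\ poly_equiv_lat2 op [set o; i] (fun x y => x == y) h,
                 h o = false & h i = true]) ->
  [/\ (* (1) *)
      (forall d d' a b, covers op d d' -> subrel_ d' al ->
         minimal_set op d d' [set a; b] -> ltgt_al op o i a b),
      (* (2) *)
      (forall a x y, al a x -> al a y ->
         Relation_Operators.clos_refl_trans A (fun u v => [/\ al a u, al a v & ltgt_al op o i u v]) x y) &
      (* (3) *)
      (forall f, is_upoly op f -> forall x y, le_al op o i x y -> le_al op o i (f x) (f y))
      /\ (forall n (p : ('I_n -> A) -> A), is_poly op p ->
            forall x y : 'I_n -> A,
              (forall j, Relation_Operators.clos_trans A (le_al op o i) (x j) (y j)) ->
              Relation_Operators.clos_trans A (le_al op o i) (p x) (p y))].
Proof.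
move=> _ _ [alc _ JI] [almc _ almsub _ cov] [[f0 [Hf0 EU [x1 [y1 [H1 H2]]]]] _] _ _.
have [alo almo] := pair_img almc alc Hf0 EU H1 H2.
pose B0 := fun p q : A => p = o /\ q = i.
have CgOK : forall x y, CgP op B0 x y -> al x y.
  by apply: CgP_min => // p q [-> ->].
have alC : forall x y, al x y -> CgP op B0 x y.
  have [] := JI (Cgb op B0) alm (Cgb_cong op B0) almc _ almsub.
  - by move=> x y /CgbP; apply: CgOK.
  - move=> th thc HC Hm.
    have [] := cov (fun x y => th x y && al x y) (cong_and thc alc).
    + by move=> x y Hxy; rewrite Hm ?almsub.
    + by move=> x y /andP [].
    + move=> Hs; exfalso; move/negP: almo; apply; apply: Hs.
      by rewrite alo HC //; apply/CgbP; apply: CgP_base.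
    + by move=> Hs x y /Hs /andP [].
  - by move=> Hs x y /Hs /CgbP.
  - by move=> Hs; exfalso; move/negP: almo; apply; apply: Hs.
have le3 : forall f, is_upoly op f -> forall x y, le_al op o i x y -> le_al op o i (f x) (f y).
  move=> f Hf x y [g [Hg <- <-]]; exists (fun t => f (g t)); split => //.
  exact: upoly_comp.
case: alc => alr als alt alcc.
split.
-
  move=> d d' a b [dc d'c dsub _ cov'] sub' [[e0 [He0 EU' [x [y [Hxy Hn]]]]] _].
  have [d'ab dab] := pair_img dc d'c He0 EU' Hxy Hn.
  have anb : a != b by apply: contraNneq dab => ->; case: dc.
  have [e [He Eim Eab]] : exists e, [/\ is_upoly op e,
      (forall t, e t \in [set a; b]) & e a != e b].
    apply: NNPP => Hno.
    have Hall : forall g, is_upoly op g -> (forall t, g t \in [set a; b]) -> g a = g b.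
      move=> g Hg Hi; apply: NNPP => Hne; apply: Hno; exists g; split => //.
      by apply/eqP.
    pose B := fun p q => d p q \/ (p = a /\ q = b).
    have [] := cov' (Cgb op B) (Cgb_cong op B).
    + by move=> u v Huv; apply/CgbP; apply: CgP_base; left.
    + move=> u v /CgbP; apply: CgP_min => // p q [/dsub //|[-> ->] //].
    + move=> Hs; move/negP: dab; apply; apply: Hs; apply/CgbP.
      by apply: CgP_base; right.
    + move=> Hs; move/negP: Hn; apply.
      have := Hs _ _ Hxy => /CgbP.
      case: (dc) => dr ds dt _.
      elim=> [u v [g [Hg [p [q [Hpq H]]]]]| u | u w v _ IH1 _ IH2].
      * have Hegpq : d (e0 (g p)) (e0 (g q)).
          case: Hpq => [Hpq|[-> ->]].
            exact: (upoly_cong dc (upoly_comp He0 Hg)).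
          rewrite (Hall (fun t => e0 (g t))) //; first exact: upoly_comp.
          by move=> t; rewrite EU'; apply: imset_f.
        by case: H => [[-> ->]|[-> ->]] //; rewrite ds.
      * exact: dr.
      * exact: (dt _ _ _ IH1 IH2).
  have Hab : CgP op B0 a b by apply: alC; apply: sub'.
  have [g [Hg Hgne]] : exists g, is_upoly op g /\ e (g o) != e (g i).
    elim: Hab Eab => [u v [g [Hg [p [q [[-> ->] H]]]]]| u | u w v _ IH1 _ IH2] Huv.
    * exists g; split => //.
      by case: H => [[Eu Ev]|[Eu Ev]]; subst u v => //; rewrite eq_sym.
    * by rewrite eqxx in Huv.
    * have [Euw|Hne] := eqVneq (e u) (e w); last exact: IH1.
      by apply: IH2; rewrite -Euw.
  have Hh : is_upoly op (fun t => e (g t)) by apply: upoly_comp.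
  split; last by apply/eqP.
  move: (Eim (g o)) (Eim (g i)) Hgne; rewrite !inE.
  move=> /orP [] /eqP E1 /orP [] /eqP E2; rewrite E1 E2 ?eqxx // => _.
  + by left; exists (fun t => e (g t)).
  + by right; exists (fun t => e (g t)).
-
  move=> a x y Hax Hay.
  have Hxy : CgP op B0 x y by apply: alC; apply: alt Hay; rewrite als.
  elim: Hxy Hax {Hay} => [u v [g [Hg [p [q [[-> ->] H]]]]]| u | u w v Huw IH1 _ IH2] Hau.
  + have Hgoi := upoly_cong (And4 alr als alt alcc) Hg alo.
    have Hav : al a v.
      by case: H => [[Eu Ev]|[Eu Ev]]; subst u v; apply: (alt _ _ _ Hau); rewrite // als.
    have [Euv|Hne] := eqVneq u v; first by rewrite Euv; exact: rt_refl.
    apply: rt_step; split => //; split; last by apply/eqP.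
    by case: H => [[Eu Ev]|[Eu Ev]]; subst u v; [left|right]; exists g.
  + exact: rt_refl.
  + apply: rt_trans (IH1 Hau) (IH2 _).
    by apply: alt Hau _; apply: CgOK.
- split => //.
  move=> n p Hp; apply: compat_poly Hp.
  + move=> t; apply: t_step; exists (fun _ => t); split => //; exact: upoly_const.
  + by move=> u v w; apply: t_trans.
  + move=> f Hf u v; elim=> [u' v' H|u' w v' _ IH1 _ IH2].
    * by apply: t_step; apply: le3.
    * exact: t_trans IH1 IH2.
Qed.
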